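(* Let $X$ be a smooth projective complex toric variety, $J$ a subgroup of $\operatorname{AutP}(X)$, and $W$ the preimage of $J$ in $\operatorname{Aut}(\Sigma)$. There exist isomorphisms \[ H^1(W,M)\cong\operatorname{coker}\left(\operatorname{TDiv}(X)^W\to\operatorname{Pic}(X)^J\right)\cong\operatorname{Am}^T(X,J). \]
   Context: Toric setup: $T$ torus, $N$ cocharacter lattice, $M$ character lattice, $\Sigma$ fan with rays $\rho_1,\ldots,\rho_r$; $\operatorname{TDiv}(X)$ is free on the torus-invariant prime divisors $D_{\rho_j}$, with exact sequence $0\to M\to\operatorname{TDiv}(X)\to\operatorname{Pic}(X)\to0$. $\operatorname{Aut}(\Sigma)$ is the group of lattice automorphisms of $N$ preserving $\Sigma$; it acts on $M$ (dually) and on $\operatorname{TDiv}(X)$ (permuting the $D_{\rho_j}$) compatibly with the sequence, hence on $\operatorname{Pic}(X)$, giving a homomorphism $\operatorname{Aut}(\Sigma)\to\operatorname{Aut}(\operatorname{Pic}(X))$ whose image is $\operatorname{AutP}(X)$, the image of $\operatorname{Aut}(X)\to\operatorname{Aut}(\operatorname{Pic}(X))$, $g\mapsto(g^\ast)^{-1}$; $W$ is the preimage of $J$ under this homomorphism. Let $[D_1],\ldots,[D_s]$ be the distinct linear equivalence classes of the $D_{\rho_j}$ and $n_i$ the number of rays with divisor in class $[D_i]$. For $[D]\in\operatorname{Pic}(X)$, $\langle D\rangle_J:=\sum_{[E]\in J\cdot[D]}[E]$. $\operatorname{Pic}^T(X,J):=\langle n_i\langle D_i\rangle_J\mid1\le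 i\le s\rangle$ and $\operatorname{Am}^T(X,J):=\operatorname{Pic}(X)^J/\operatorname{Pic}^T(X,J)$. *)

(* Defs.v *)
From HB Require Import structures.
From mathcomp Require Import all_boot all_order all_algebra all_fingroup.
From Stdlib Require Import ClassicalEpsilon.
Set Implicit Arguments. Unset Strict Implicit. Unset Printing Implicit Defensive.
Import Order.TTheory GRing.Theory Num.Theory.
Local Open Scope ring_scope.

Definition pb (P : Prop) : bool :=
  if excluded_middle_informative P then true else false.

Section Toric.
Variables (n r : nat) (u : 'I_r -> 'rV[int]_n) (cones : {set {set 'I_r}}).

(* <v, m> for v in N = Z^n (row vectors), m in M = Z^n (column vectors) *)
Definition pairing (v : 'rV[int]_n) (m : 'cV[int]_n) : int := (v *m m) 0 0.

Definition ratv (v : 'rV[int]_n) : 'rV[rat]_n := map_mx (fun z : int => z%:~R) v.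

Definition in_cone (s : {set 'I_r}) (x : 'rV[rat]_n) : Prop :=
  exists c : 'I_r -> rat, (forall i, 0 <= c i) /\ (forall i, i \notin s -> c i = 0)
    /\ x = \sum_i c i *: ratv (u i).

(* Sigma is a fan whose cones are the cones on the index sets in [cones],
   with rays exactly the u_i *)
Definition is_fan : Prop :=
  [/\ injective u,
      (forall i, [set i] \in cones),
      (forall s t : {set 'I_r}, s \in cones -> t \subset s -> t \in cones)
    & (forall s t, s \in cones -> t \in cones -> forall x,
          in_cone s x -> in_cone t x -> in_cone (s :&: t) x)].

Definition is_smooth : Prop :=
  forall s, s \in cones -> exists B : 'M[int]_n, exists f : 'I_r -> 'I_n,
    [/\ B \in unitmx, {in s &, injective f} & forall i, i \in s -> row (f i) B = u i].

Definition is_complete : Prop := forall x, exists2 s, s \in cones & in_cone s x.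

(* existence of an ample T-divisor sum_i a_i D_i: strictly convex support
   function (Cox-Little-Schenck, Thm 6.1.14) *)
Definition is_projective : Prop :=
  exists a : 'I_r -> int, forall s, s \in cones -> #|s| = n ->
    exists m : 'cV[int]_n, (forall i, i \in s -> pairing (u i) m = - a i) /\
                           (forall i, i \notin s -> - a i < pairing (u i) m).

Definition smooth_projective_fan : Prop :=
  [/\ is_fan, is_smooth, is_complete & is_projective].

(* Aut(Sigma), realised as the induced permutations of the rays *)
Definition is_autS (p : {perm 'I_r}) : Prop :=
  exists A : 'M[int]_n, [/\ A \in unitmx, (forall i, u i *m A = u (p i))
                          & (forall s, s \in cones -> p @: s \in cones)].

Definition autmx (p : {perm 'I_r}) : 'M[int]_n :=
  epsilon (inhabits 0) (fun A : 'M[int]_n => forall i, u i *m A = u (p i)).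

(* TDiv(X) = Z^{rays}; D_{rho_j} = ediv j *)
Definition ediv (j : 'I_r) : {ffun 'I_r -> int} := [ffun i => (i == j)%:R].
(* principal divisor div(chi^m) = sum_i <m,u_i> D_i ; image of M in TDiv *)
Definition divm (m : 'cV[int]_n) : {ffun 'I_r -> int} := [ffun i => pairing (u i) m].
Definition isM (D : {ffun 'I_r -> int}) : Prop := exists m, D = divm m.
(* left action of p on TDiv (p maps D_{rho_j} to D_{rho_(p^-1 j)}),
   compatible with the left action m |-> autmx p *m m on M *)
Definition tact (p : {perm 'I_r}) (D : {ffun 'I_r -> int}) : {ffun 'I_r -> int} :=
  [ffun i => D (p i)].

Variable W : {group {perm 'I_r}}.

(* H^1(W, M) = Z^1 / B^1 *)
Definition Z1 (f : {ffun {perm 'I_r} -> 'cV[int]_n}) : Prop :=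
  (forall g h, g \in W -> h \in W -> f (g * h)%g = f g + autmx g *m f h) /\
  (forall g, g \notin W -> f g = 0).
Definition B1 (f : {ffun {perm 'I_r} -> 'cV[int]_n}) : Prop :=
  exists m : 'cV[int]_n, forall g, f g = if g \in W then autmx g *m m - m else 0.

(* lifts to TDiv of Pic(X)^J *)
Definition PicJ (D : {ffun 'I_r -> int}) : Prop :=
  forall p, p \in W -> isM (tact p D - D).
(* lift of the image of TDiv(X)^W in Pic(X) *)
Definition ImTDivW (D : {ffun 'I_r -> int}) : Prop :=
  exists D1 D2, [/\ isM D1, (forall p, p \in W -> tact p D2 = D2) & D = D1 + D2].

(* linear equivalence class of D_{rho_k} (as set of ray indices) *)
Definition cls (k : 'I_r) : {set 'I_r} := [set l | pb (isM (ediv l - ediv k))].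
Definition orbcls (j : 'I_r) : {set {set 'I_r}} := [set cls (p j) | p : {perm 'I_r} in W].
Definition clsrep (C : {set 'I_r}) : {ffun 'I_r -> int} :=
  if [pick l in C] is Some l then ediv l else 0.
(* < D_{rho_j} >_J, lifted to TDiv *)
Definition orbsum (j : 'I_r) : {ffun 'I_r -> int} := \sum_(C in orbcls j) clsrep C.
(* lift of Pic^T(X,J) = < n_i < D_i >_J > *)
Definition PicT (D : {ffun 'I_r -> int}) : Prop :=
  exists D1 (c : 'I_r -> int),
    isM D1 /\ D = D1 + \sum_j (orbsum j *+ #|cls j|) *~ c j.

End Toric.

(* A1/B1 is isomorphic as an abelian group to A2/B2 (A_k subgroups, B_k <= A_k);
   f is any set-theoretic lift of the isomorphism *)
Definition quot_iso (T1 T2 : zmodType) (A1 B1 : T1 -> Prop) (A2 B2 : T2 -> Prop) : Prop :=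
  exists f : T1 -> T2,
   [/\ (forall x, A1 x -> A2 (f x)),
       (forall x y, A1 x -> A1 y -> B2 (f (x - y) - (f x - f y))),
       (forall x, A1 x -> (B2 (f x) <-> B1 x))
     & (forall y, A2 y -> exists2 x, A1 x & B2 (f x - y))].

(* Main.v *)
Require Import Defs.
From HB Require Import structures.
From mathcomp Require Import all_boot all_order all_algebra all_fingroup.
From Stdlib Require Import ClassicalEpsilon.
From mathcomp.algebra_tactics Require Import lra ring.
Set Implicit Arguments. Unset Strict Implicit. Unset Printing Implicit Defensive.
Import GRing.Theory Num.Theory.
Local Open Scope ring_scope.

Section Basic.
Variables (n r : nat) (u : 'I_r -> 'rV[int]_n) (cones : {set {set 'I_r}}).
Hypothesis Hcomp : is_complete u cones.

Lemma span (x : 'rV[rat]_n) : exists c : 'I_r -> rat, x = \sum_i c i *: ratv (u i).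
Proof. have [s _ [c [_ [_ ->]]]] := Hcomp x; by exists c. Qed.

Lemma ratvM (p : nat) (v : 'rV[int]_n) (X : 'M[int]_(n, p)) :
  map_mx (fun z : int => z%:~R : rat) (v *m X) = ratv v *m map_mx (fun z : int => z%:~R : rat) X.
Proof. by rewrite /ratv map_mxM. Qed.

Lemma zero_on_rays (p : nat) (X : 'M[int]_(n, p)) : (forall i, u i *m X = 0) -> X = 0.
Proof.
move=> H.
set Xr := map_mx (fun z : int => z%:~R : rat) X.
have H1 : forall x : 'rV[rat]_n, x *m Xr = 0.
  move=> x; have [c ->] := span x.
  rewrite mulmx_suml big1 // => i _.
  by rewrite -scalemxAl /Xr -ratvM H map_mx0 scaler0.
have H2 : Xr = 0.
  by apply/row_matrixP => j; rewrite rowE H1 row0.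
apply/matrixP => i j.
have := congr1 (fun M : 'M[rat]_(n, p) => M i j) H2.
by rewrite /Xr !mxE => /eqP; rewrite intr_eq0 => /eqP.
Qed.

End Basic.

Section Basic2.
Variables (n r : nat) (u : 'I_r -> 'rV[int]_n) (cones : {set {set 'I_r}}).
Hypothesis Hcomp : is_complete u cones.
Implicit Types (p q g h : {perm 'I_r}) (D : {ffun 'I_r -> int}) (m : 'cV[int]_n).

Lemma divmD m1 m2 : divm u (m1 + m2) = divm u m1 + divm u m2.
Proof. by apply/ffunP => i; rewrite !ffunE /pairing mulmxDr mxE. Qed.
Lemma divmN m : divm u (- m) = - divm u m.
Proof. by apply/ffunP => i; rewrite !ffunE /pairing mulmxN mxE. Qed.
Lemma divmB m1 m2 : divm u (m1 - m2) = divm u m1 - divm u m2.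
Proof. by rewrite divmD divmN. Qed.
Lemma divm0 : divm u 0 = 0.
Proof. by apply/ffunP => i; rewrite !ffunE /pairing mulmx0 mxE. Qed.
Lemma divmZ m z : divm u (m *~ z) = divm u m *~ z.
Proof. by apply/ffunP => i; rewrite !(ffunMzE, ffunE) /pairing (raddfMz (mulmx (u i))) -scaler_int mxE mulrzl. Qed.

Lemma divm_inj m : divm u m = 0 -> m = 0.
Proof.
move=> H; apply: (zero_on_rays Hcomp) => i.
apply/matrixP => a b; rewrite !ord1 [RHS]mxE.
have := congr1 (fun f : {ffun 'I_r -> int} => f i) H; rewrite !ffunE /pairing. by move=> ->.
Qed.

Lemma divm_injective m1 m2 : divm u m1 = divm u m2 -> m1 = m2.
Proof. by move=> H; apply/eqP; rewrite -subr_eq0; apply/eqP/divm_inj; rewrite divmB H subrr. Qed.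

Lemma isM0 : isM u 0.
Proof. by exists 0; rewrite divm0. Qed.
Lemma isMD D1 D2 : isM u D1 -> isM u D2 -> isM u (D1 + D2).
Proof. by move=> [m1 ->] [m2 ->]; exists (m1 + m2); rewrite divmD. Qed.
Lemma isMN D : isM u D -> isM u (- D).
Proof. by move=> [m ->]; exists (- m); rewrite divmN. Qed.
Lemma isMB D1 D2 : isM u D1 -> isM u D2 -> isM u (D1 - D2).
Proof. by move=> H1 H2; apply: isMD => //; apply: isMN. Qed.
Lemma isMZ D z : isM u D -> isM u (D *~ z).
Proof. by move=> [m ->]; exists (m *~ z); rewrite divmZ. Qed.
Lemma isM_sum (I : finType) (P : pred I) (F : I -> {ffun 'I_r -> int}) :
  (forall i, P i -> isM u (F i)) -> isM u (\sum_(i | P i) F i).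
Proof.
move=> H; elim/big_ind: _ => //; first exact: isM0.
by move=> x y; apply: isMD.
Qed.

Lemma autmx_uniq (p : {perm 'I_r}) A : (forall i, u i *m A = u (p i)) -> autmx u p = A.
Proof.
move=> H.
have Hs : forall i, u i *m autmx u p = u (p i).
  by apply: (epsilon_spec (inhabits 0) (fun A : 'M[int]_n => forall i, u i *m A = u (p i))); exists A.
apply/eqP; rewrite -subr_eq0; apply/eqP; apply: (zero_on_rays Hcomp) => i.
by rewrite mulmxBr Hs H subrr.
Qed.

Lemma autmx_spec p : is_autS u cones p -> forall i, u i *m autmx u p = u (p i).
Proof. by move=> [A [_ HA _]]; rewrite (autmx_uniq HA). Qed.

Lemma tactD p D1 D2 : tact p (D1 + D2) = tact p D1 + tact p D2.
Proof. by apply/ffunP => i; rewrite !(ffunMzE, ffunE). Qed.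
Lemma tactN p D : tact p (- D) = - tact p D.
Proof. by apply/ffunP => i; rewrite !(ffunMzE, ffunE). Qed.
Lemma tactB p D1 D2 : tact p (D1 - D2) = tact p D1 - tact p D2.
Proof. by apply/ffunP => i; rewrite !(ffunMzE, ffunE). Qed.
Lemma tactZ p D z : tact p (D *~ z) = tact p D *~ z.
Proof. by apply/ffunP => i; rewrite !(ffunMzE, ffunE). Qed.
Lemma tact0 p : tact p 0 = 0.
Proof. by apply/ffunP => i; rewrite !(ffunMzE, ffunE). Qed.
Lemma tactM p q D : tact (p * q)%g D = tact p (tact q D).
Proof. by apply/ffunP => i; rewrite !ffunE permM. Qed.
Lemma tact1 D : tact 1%g D = D.
Proof. by apply/ffunP => i; rewrite !ffunE perm1. Qed.
Lemma tact_ediv p j : tact p (ediv j) = ediv ((p^-1)%g j).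
Proof.
by apply/ffunP => i; rewrite !ffunE (canF_eq (permK p)).
Qed.

Lemma tact_divm p m : is_autS u cones p -> tact p (divm u m) = divm u (autmx u p *m m).
Proof.
move=> Hp; apply/ffunP => i; rewrite !ffunE /pairing.
by rewrite mulmxA autmx_spec.
Qed.

Variable W : {group {perm 'I_r}}.
Hypothesis HW : forall p, p \in W -> is_autS u cones p.

Lemma autmxM g h : g \in W -> h \in W -> autmx u (g * h)%g = autmx u g *m autmx u h.
Proof.
move=> Hg Hh; apply: autmx_uniq => i.
by rewrite mulmxA (autmx_spec (HW Hg)) (autmx_spec (HW Hh)) permM.
Qed.

Lemma autmx1 : autmx u 1%g = 1%:M.
Proof. by apply: autmx_uniq => i; rewrite mulmx1 perm1. Qed.

Lemma isM_tact p D : p \in W -> isM u D -> isM u (tact p D).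
Proof. by move=> Hp [m ->]; rewrite (tact_divm _ (HW Hp)); exists (autmx u p *m m). Qed.

End Basic2.

Section Part1.
Variables (n r : nat) (u : 'I_r -> 'rV[int]_n) (cones : {set {set 'I_r}}).
Hypothesis Hcomp : is_complete u cones.
Variable W : {group {perm 'I_r}}.
Hypothesis HW : forall p, p \in W -> is_autS u cones p.
Implicit Types (p q g h : {perm 'I_r}) (D : {ffun 'I_r -> int}) (m : 'cV[int]_n) (c : {ffun {perm 'I_r} -> 'cV[int]_n}).

Definition rep (i : 'I_r) : 'I_r := odflt i [pick j in orbit 'P W i].
Definition gi (i : 'I_r) : {perm 'I_r} := odflt 1%g [pick g in W | g (rep i) == i].

Lemma rep_orbit i : rep i \in orbit 'P W i.
Proof.
rewrite /rep; case: pickP => [j //|H].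
by have := H i; rewrite orbit_refl.
Qed.

Lemma rep_eq i j : j \in orbit 'P W i -> rep j = rep i.
Proof.
move/orbit_eqP => E; rewrite /rep E; case: pickP => [//|H].
by have := H i; rewrite orbit_refl.
Qed.

Lemma rep_act g i : g \in W -> rep (g i) = rep i.
Proof. by move=> Hg; apply: rep_eq; exact: (mem_orbit 'P i Hg). Qed.

Lemma gi_spec i : gi i \in W /\ gi i (rep i) = i.
Proof.
rewrite /gi; case: pickP => [g /andP [Hg /eqP E] //|H].
have : i \in orbit 'P W (rep i) by rewrite orbit_sym rep_orbit.
case/orbitP => g Hg E; have := H g; rewrite Hg /=; rewrite /= /aperm in E; by rewrite E eqxx.
Qed.

Definition phi (c : {ffun {perm 'I_r} -> 'cV[int]_n}) g : {ffun 'I_r -> int} := divm u (c g).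

Section Cocycle.
Variable c : {ffun {perm 'I_r} -> 'cV[int]_n}.
Hypothesis Hc : Z1 u W c.

Lemma phiM g h : g \in W -> h \in W -> phi c (g * h)%g = phi c g + tact g (phi c h).
Proof.
move=> Hg Hh; rewrite /phi (proj1 Hc _ _ Hg Hh) divmD.
by rewrite (tact_divm Hcomp _ (HW Hg)).
Qed.

Lemma phiMi g h i : g \in W -> h \in W -> phi c (g * h)%g i = phi c g i + phi c h (g i).
Proof. by move=> Hg Hh; rewrite phiM // !ffunE. Qed.

Lemma phi1 : phi c 1%g = 0.
Proof.
have := phiM (group1 W) (group1 W); rewrite mulg1 tact1 => /eqP.
by rewrite -{1}(addr0 (phi c 1%g)) => /eqP /addrI <-.
Qed.

Lemma phi_stab s i : s \in W -> s i = i -> phi c s i = 0.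
Proof.
move=> Hs Ei.
have H : forall k, phi c (s ^+ k)%g i = phi c s i *+ k.
  elim=> [|k IH]; first by rewrite expg0 phi1 ffunE.
  by rewrite expgS phiMi ?groupX // Ei IH mulrS.
have := H #[s]%g; rewrite expg_order phi1 ffunE => /esym /eqP.
by rewrite mulrn_eq0 eqn0Ngt order_gt0 /= => /eqP.
Qed.

Lemma phi_wd h h' i : h \in W -> h' \in W -> h i = h' i -> phi c h i = phi c h' i.
Proof.
move=> Hh Hh' E.
set s := (h' * h^-1)%g.
have Hs : s \in W by rewrite groupM ?groupV.
have Es : s i = i by rewrite /s permM -E -permM mulgV perm1.
have -> : h' = (s * h)%g by rewrite /s -mulgA mulVg mulg1.
by rewrite phiMi // (phi_stab Hs Es) add0r Es.
Qed.

End Cocycle.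

Definition Df (c : {ffun {perm 'I_r} -> 'cV[int]_n}) : {ffun 'I_r -> int} :=
  [ffun i => phi c (gi i) (rep i)].

Lemma Df_cocycle c g : Z1 u W c -> g \in W -> tact g (Df c) - Df c = phi c g.
Proof.
move=> Hc Hg; apply/ffunP => i.
have [Hh Eh] := gi_spec i.
have [Hh' Eh'] := gi_spec (g i).
rewrite rep_act // in Eh'.
have K : phi c (gi (g i)) (rep i) = phi c (gi i) (rep i) + phi c g i.
  rewrite (@phi_wd c Hc (gi (g i)) (gi i * g)%g) ?groupM //; last by rewrite permM Eh Eh'.
  by rewrite phiMi // Eh.
move: K; rewrite !ffunE rep_act // => ->.
by rewrite addrC addKr.
Qed.

Lemma DfB c1 c2 : Df (c1 - c2) = Df c1 - Df c2.
Proof. by apply/ffunP => i; rewrite !ffunE /pairing mulmxBr mxE [X in _ + X = _]mxE. Qed.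

Definition rinv D : {ffun 'I_r -> int} := [ffun i => D (rep i)].
Lemma rinv_inv g D : g \in W -> tact g (rinv D) = rinv D.
Proof. by move=> Hg; apply/ffunP => i; rewrite !ffunE rep_act. Qed.

Lemma Df_cob c m : (forall g, g \in W -> c g = autmx u g *m m - m) -> Df c = divm u m - rinv (divm u m).
Proof.
move=> H; apply/ffunP => i; rewrite !ffunE.
have [Hh Eh] := gi_spec i.
by rewrite H // /pairing mulmxBr mxE [X in _ + X = _]mxE mulmxA (autmx_spec Hcomp (HW Hh)) Eh.
Qed.

Lemma part1 : quot_iso (Z1 u W) (B1 u W) (PicJ u W) (ImTDivW u W).
Proof.
exists Df; split.
- move=> c Hc p Hp; rewrite Df_cocycle //; by exists (c p).
- move=> c1 c2 _ _; rewrite DfB subrr; exists 0, 0; split; rewrite ?addr0 //.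
  + exact: isM0.
  + by move=> p _; rewrite tact0.
- move=> c Hc; split.
  + move=> [D1 [D2 [[m Em] HD2 ED]]]; exists m => g.
    case: ifP => Hg; last by apply: (proj2 Hc); rewrite Hg.
    apply: (divm_injective Hcomp).
    rewrite -/(phi c g) -Df_cocycle // ED tactD HD2 // Em (tact_divm Hcomp _ (HW Hg)).
    have -> := divmB u (autmx u g *m m) m.
    by rewrite opprD addrACA subrr addr0.
  + case=> m0 Hm; exists (divm u m0), (- rinv (divm u m0)); split.
    * by exists m0.
    * by move=> p Hp; rewrite tactN rinv_inv.
    * rewrite (@Df_cob c m0) // => g Hg; by rewrite Hm Hg.
- move=> D HD.
  pose mof g := epsilon (inhabits 0) (fun m => tact g D - D = divm u m).
  have Hmof : forall g, g \in W -> tact g D - D = divm u (mof g).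
    move=> g Hg; exact: (epsilon_spec (inhabits 0) (fun m => tact g D - D = divm u m) (HD g Hg)).
  pose c := [ffun g => if g \in W then mof g else 0].
  have Hc : Z1 u W c.
    split; last by move=> g Hg; rewrite ffunE (negbTE Hg).
    move=> g h Hg Hh; rewrite !ffunE groupM // Hg Hh.
    apply: (divm_injective Hcomp).
    rewrite divmD -(tact_divm Hcomp _ (HW Hg)) -!Hmof ?groupM // tactM tactB.
    by rewrite [RHS]addrC [RHS]addrA subrK.
  exists c => //.
  have -> : Df c = D - rinv D.
    apply/ffunP => i; rewrite !ffunE.
    have [Hh Eh] := gi_spec i.
    rewrite Hh; have := congr1 (fun f : {ffun 'I_r -> int} => f (rep i)) (Hmof _ Hh).
    by rewrite !ffunE Eh => <-.
  exists 0, (- rinv D); split.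
  + exact: isM0.
  + by move=> p Hp; rewrite tactN rinv_inv.
  + by rewrite add0r addrC addKr.
Qed.

End Part1.

Lemma pbP (P : Prop) : pb P = true <-> P.
Proof. by rewrite /pb; case: excluded_middle_informative. Qed.

Lemma sum_delta (r : nat) (R : pzRingType) (c : 'I_r -> R) (l : 'I_r) :
  \sum_i c i * (i == l)%:R = c l.
Proof.
rewrite (bigD1 l) //= eqxx mulr1 big1 ?addr0 // => i /negbTE ->.
by rewrite mulr0.
Qed.

Section Geo.
Variables (n r : nat) (u : 'I_r -> 'rV[int]_n) (cones : {set {set 'I_r}}).
Hypothesis Hfan : is_fan u cones.
Hypothesis Hsm : is_smooth u cones.
Hypothesis Hcomp : is_complete u cones.

Local Notation ratmx := (map_mx (fun z : int => z%:~R : rat)).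

Lemma LI s (c d : 'I_r -> rat) : s \in cones ->
  (forall i, i \notin s -> c i = 0) -> (forall i, i \notin s -> d i = 0) ->
  \sum_i c i *: ratv (u i) = \sum_i d i *: ratv (u i) ->
  forall j, j \in s -> c j = d j.
Proof.
move=> Hs Hc Hd E j Hj.
have [B [f [HB Hf Hrow]]] := Hsm Hs.
set e := fun i => c i - d i.
have He : forall i, i \notin s -> e i = 0 by move=> i Hi; rewrite /e Hc ?Hd ?subr0.
have E0 : \sum_i e i *: ratv (u i) = 0.
  by rewrite /e; under eq_bigr do rewrite scalerBl; rewrite sumrB E subrr.
set x : 'rV[rat]_n := \sum_i e i *: delta_mx 0 (f i).
have Hx : x *m ratmx B = 0.
  rewrite /x mulmx_suml -[RHS]E0; apply eq_bigr => i _.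
  case: (boolP (i \in s)) => Hi; last by rewrite He // !scale0r mul0mx.
  by rewrite -scalemxAl -rowE -map_row Hrow.
have HBu : ratmx B \in unitmx.
  by rewrite unitmxE det_map_mx rmorph_unit // -unitmxE.
have x0 : x = 0 by rewrite -(mulmxK HBu x) Hx mul0mx.
have := congr1 (fun M : 'rV[rat]_n => M 0 (f j)) x0.
rewrite /x summxE (bigD1 j) //= big1 ?mxE ?eqxx ?mulr1 ?addr0.
  by move=> /eqP; rewrite subr_eq0 => /eqP.
move=> i /negbTE Hij; rewrite !mxE.
case: (boolP (i \in s)) => Hi; last by rewrite He // mul0r.
have -> : (f j == f i) = false by apply/negbTE; apply: contraFneq Hij => /esym /(Hf _ _ Hi Hj) ->.
by rewrite andbF mulr0.
Qed.


Lemma sum_delta_vec (v : 'I_r -> 'rV[rat]_n) (l : 'I_r) :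
  \sum_i (i == l)%:R *: v i = v l.
Proof.
rewrite (bigD1 l) //= eqxx scale1r big1 ?addr0 // => i /negbTE ->.
by rewrite scale0r.
Qed.

Section Swap.
Variables (k l : 'I_r) (m : 'cV[int]_n).
Hypothesis Hkl : k != l.
Hypothesis Hm : forall i, pairing (u i) m = (i == l)%:R - (i == k)%:R.

Definition Lf (v : 'rV[rat]_n) : rat := (v *m ratmx m) 0 0.

Lemma Lf_u i : Lf (ratv (u i)) = (i == l)%:R - (i == k)%:R.
Proof.
rewrite /Lf -ratvM mxE -/(pairing _ _) Hm.
by rewrite rmorphB /= !rmorph_nat.
Qed.

Lemma Lf_sum (c : 'I_r -> rat) : Lf (\sum_i c i *: ratv (u i)) = c l - c k.
Proof.
rewrite /Lf mulmx_suml summxE.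
rewrite (eq_bigr (fun i => c i * ((i == l)%:R - (i == k)%:R))); last first.
  by move=> i _; rewrite -scalemxAl mxE -/(Lf _) Lf_u.
by rewrite (eq_bigr (fun i => c i * (i == l)%:R - c i * (i == k)%:R)) ?sumrB ?sum_delta // => i _; rewrite mulrBr.
Qed.

Lemma swap_cone s : s \in cones -> l \notin s -> (s :\ k) :|: [set l] \in cones.
Proof.
move=> Hs Hl.
have [_ _ Hsub Hint] := Hfan.
set t := s :\ k.
have Ht : t \in cones by apply: (Hsub s) => //; apply: subD1set.
have Hlt : l \notin t by rewrite !inE negb_and Hl orbT.
have Hkt : k \notin t by rewrite !inE eqxx.
pose cx i : rat := (i == l)%:R + (i \in t)%:R.
have [s2 Hs2 [a [Ha0 [Has2 Ex]]]] := Hcomp (\sum_i cx i *: ratv (u i)).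
have Lx : a l - a k = 1.
  rewrite -Lf_sum -Ex Lf_sum /cx eqxx (negbTE Hlt) (negbTE Hkl) (negbTE Hkt).
  by rewrite addr0 subr0.
have Hak := Ha0 k.
have Hls2 : l \in s2.
  apply/negPn/negP => H; have := Has2 _ H; lra.
pose w := \sum_i (i \in t)%:R *: ratv (u i).
have Hw1 : in_cone u t w.
  exists (fun i => (i \in t)%:R); split; first by move=> i; rewrite ler0n.
  by split => // i /negbTE ->.
have Hw2 : in_cone u s2 w.
  exists (fun i => a i - (i == l)%:R); split.
    move=> i; case: eqP => [->|_]; first by rewrite mulr1n; lra.
    by rewrite subr0.
  split.
    move=> i Hi; rewrite Has2 //; case: eqP => [E|_]; last by rewrite subr0.
    by move: Hi; rewrite E Hls2.
  under eq_bigr do rewrite scalerBl.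
  rewrite sumrB -Ex sum_delta_vec /w /cx.
  rewrite [in RHS](eq_bigr (fun i => (i == l)%:R *: ratv (u i) + (i \in t)%:R *: ratv (u i))); last by move=> i _; rewrite scalerDl.
  by rewrite big_split /= sum_delta_vec addrC addrK.
have [b [Hb0 [Hbs Ew]]] := Hint _ _ Hs2 Ht w Hw2 Hw1.
have Hts2 : t \subset s2.
  apply/subsetP => j Hj.
  have Sc : forall i, i \notin t -> ((fun i => (i \in t)%:R) i : rat) = 0.
    by move=> i Hi; rewrite /= (negbTE Hi).
  have Sb : forall i, i \notin t -> b i = 0.
    by move=> i Hi; apply: Hbs; rewrite inE (negbTE Hi) andbF.
  have E1 := @LI t (fun i => (i \in t)%:R) b Ht Sc Sb Ew j Hj.
  rewrite /= Hj in E1.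
  apply/negPn/negP => H.
  have := Hbs j; rewrite inE (negbTE H) /= => /(_ isT).
  rewrite -E1 => H1. by have := oner_neq0 rat; rewrite -H1 eqxx.
apply: (Hsub s2) => //; apply/subsetP => i.
rewrite in_setU in_set1 => /orP [Hi | /eqP ->]; last by [].
exact: (subsetP Hts2).
Qed.

End Swap.

Lemma tperm_img (k l : 'I_r) (s : {set 'I_r}) : tperm k l @: s = [set i | tperm k l i \in s].
Proof.
apply/setP => i; rewrite inE; apply/imsetP/idP => [[j Hj ->]|H]; first by rewrite tpermK.
by exists (tperm k l i); rewrite ?tpermK.
Qed.

Lemma tperm_autS (k l : 'I_r) (m : 'cV[int]_n) : k != l ->
  (forall i, pairing (u i) m = (i == l)%:R - (i == k)%:R) ->
  is_autS u cones (tperm k l).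
Proof.
move=> Hkl Hm.
pose A : 'M[int]_n := 1%:M - m *m (u l - u k).
have HA : forall i, u i *m A = u (tperm k l i).
  move=> i; rewrite /A mulmxBr mulmx1 mulmxA (mx11_scalar (u i *m m)) -/(pairing _ _) mul_scalar_mx Hm.
  case: (tpermP k l i) => [->|->|/eqP Hik /eqP Hil].
  - rewrite eqxx (negbTE Hkl) /= sub0r scaleN1r opprK addrC subrK //.
  - rewrite eqxx eq_sym (negbTE Hkl) /= subr0 scale1r opprB addrC subrK //.
  - by rewrite (negbTE Hik) (negbTE Hil) /= subr0 scale0r subr0.
exists A; split => //.
  have AA : A *m A = 1%:M.
    apply/eqP; rewrite -subr_eq0; apply/eqP; apply: (zero_on_rays Hcomp) => i.
    by rewrite mulmxBr mulmxA !HA tpermK mulmx1 subrr.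
  by case: (mulmx1_unit AA).
move=> s Hs; rewrite tperm_img.
have [_ _ Hsub _] := Hfan.
have Hlk : l != k by rewrite eq_sym.
have Hm' : forall i, pairing (u i) (- m) = (i == k)%:R - (i == l)%:R.
  by move=> i; rewrite /pairing mulmxN mxE -/(pairing _ _) Hm opprB.
case: (boolP (k \in s)) => Hk; case: (boolP (l \in s)) => Hl.
- suff -> : [set i | tperm k l i \in s] = s by [].
  apply/setP => i; rewrite inE; case: (tpermP k l i) => [->|->|_ _] //; by rewrite ?Hk ?Hl.
- suff -> : [set i | tperm k l i \in s] = (s :\ k) :|: [set l] by apply: (swap_cone Hkl Hm).
  apply/setP => i; rewrite !inE; case: (tpermP k l i) => [->|->|/eqP Hik /eqP Hil].
  + by rewrite eqxx (negbTE Hkl) (negbTE Hl).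
  + by rewrite eqxx Hk orbT.
  + by rewrite Hik (negbTE Hil) orbF.
- suff -> : [set i | tperm k l i \in s] = (s :\ l) :|: [set k] by apply: (swap_cone Hlk Hm').
  apply/setP => i; rewrite !inE; case: (tpermP k l i) => [->|->|/eqP Hik /eqP Hil].
  + by rewrite Hl eqxx orbT.
  + by rewrite eqxx (negbTE Hlk) (negbTE Hk).
  + by rewrite Hil (negbTE Hik) orbF.
- suff -> : [set i | tperm k l i \in s] = s by [].
  apply/setP => i; rewrite inE; case: (tpermP k l i) => [->|->|_ _] //.
  + by rewrite (negbTE Hk) (negbTE Hl).
  + by rewrite (negbTE Hk) (negbTE Hl).
Qed.

End Geo.

Section Part2.
Variables (n r : nat) (u : 'I_r -> 'rV[int]_n) (cones : {set {set 'I_r}}).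
Hypothesis Hfan : is_fan u cones.
Hypothesis Hsm : is_smooth u cones.
Hypothesis Hcomp : is_complete u cones.
Variable W : {group {perm 'I_r}}.
Hypothesis HW : forall p, p \in W -> is_autS u cones p.
Hypothesis Hker : forall p, is_autS u cones p ->
     (forall D, isM u (tact p D - D)) -> p \in W.
Implicit Types (p q g h : {perm 'I_r}) (D : {ffun 'I_r -> int}) (m : 'cV[int]_n).

Lemma cls_mem k l : (l \in cls u k) <-> isM u (ediv l - ediv k).
Proof. by rewrite inE; apply: pbP. Qed.

Lemma cls_refl k : k \in cls u k.
Proof. by apply/cls_mem; rewrite subrr; apply: isM0. Qed.

Lemma cls_eq k l : l \in cls u k -> cls u l = cls u k.
Proof.
move=> /cls_mem H; apply/setP => i; apply/idP/idP => /cls_mem Hi; apply/cls_mem.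
- by have := isMD Hi H; rewrite addrA subrK.
- by have := isMB Hi H; rewrite opprB addrA subrK.
Qed.

Lemma cls_orbit k l : l \in cls u k -> l \in orbit 'P W k.
Proof.
case: (eqVneq k l) => [<- _|Hkl]; first exact: orbit_refl.
move=> /cls_mem [m Em].
have Hm : forall i, pairing (u i) m = (i == l)%:R - (i == k)%:R.
  by move=> i; have := congr1 (fun f : {ffun 'I_r -> int} => f i) Em; rewrite !ffunE => <-.
have Ht : tperm k l \in W.
  apply: Hker; first exact: (tperm_autS Hfan Hsm Hcomp Hkl Hm).
  move=> D.
  have -> : tact (tperm k l) D - D = divm u (- m) *~ (D l - D k).
    apply/ffunP => i; rewrite ffunMzE divmN -Em !ffunE.
    case: (tpermP k l i) => [->|->|/eqP Hik /eqP Hil].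
    - by rewrite eqxx (negbTE Hkl) /= mulrzz; ring.
    - by rewrite eqxx eq_sym (negbTE Hkl) /= mulrzz; ring.
    - by rewrite (negbTE Hik) (negbTE Hil) /= subrr mul0rz.
  by apply: isMZ; exists (- m).
by have := mem_orbit 'P k Ht; rewrite /= /aperm tpermL.
Qed.

Lemma card_cls_le p j : p \in W -> (#|cls u j| <= #|cls u (p j)|)%N.
Proof.
move=> Hp.
rewrite -(card_imset (cls u j) (@perm_inj _ p)).
apply: subset_leq_card; apply/subsetP => x /imsetP [l Hl ->].
apply/cls_mem; move/cls_mem: Hl => Hl.
have := isM_tact Hcomp HW (groupVr Hp) Hl.
by rewrite tactB !tact_ediv invgK.
Qed.

Lemma card_cls p j : p \in W -> #|cls u (p j)| = #|cls u j|.
Proof.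
move=> Hp; apply/eqP; rewrite eqn_leq card_cls_le //.
have := card_cls_le (p j) (groupVr Hp); by rewrite permK => ->.
Qed.


Definition osum j : {ffun 'I_r -> int} := [ffun i => (i \in orbit 'P W j)%:R].

Lemma osum_inv p j : p \in W -> tact p (osum j) = osum j.
Proof. by move=> Hp; apply/ffunP => i; rewrite !ffunE (orbit_actr 'P j i Hp). Qed.

Lemma osumE j : osum j = \sum_(i in orbit 'P W j) ediv i.
Proof.
apply/ffunP => x; rewrite sum_ffunE ffunE.
case: (boolP (x \in orbit 'P W j)) => Hx.
  rewrite (bigD1 x) //= ffunE eqxx big1 ?addr0 // => i /andP [_ Hi].
  by rewrite ffunE eq_sym (negbTE Hi).
rewrite big1 // => i Hi; rewrite ffunE.
by case: eqP => // E; move: Hx; rewrite E Hi.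
Qed.

Lemma cover_orbcls j : cover (orbcls u W j) = orbit 'P W j.
Proof.
apply/setP => x; apply/bigcupP/idP.
- move=> [C /imsetP [p Hp ->] Hx].
  have := cls_orbit Hx.
  by rewrite (orbit_act 'P j Hp).
- move=> /orbitP [p Hp <-]; exists (cls u (p j)); last exact: cls_refl.
  by apply/imsetP; exists p.
Qed.

Lemma triv_orbcls j : trivIset (orbcls u W j).
Proof.
apply/trivIsetP => A B /imsetP [p _ ->] /imsetP [q _ ->] HAB.
apply/pred0P => x /=; apply/negbTE/negP => /andP [H1 H2].
by move/negP: HAB; apply; rewrite -(cls_eq H1) -(cls_eq H2).
Qed.

Lemma key j : isM u (osum j - orbsum u W j *+ #|cls u j|).
Proof.
rewrite osumE -cover_orbcls (big_trivIset _ (triv_orbcls j)) /orbsum -sumrMnl -sumrB.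
apply: isM_sum => C /imsetP [p Hp ->].
rewrite -(card_cls j Hp) /clsrep.
case: pickP => [l0 Hl0|H]; last by have := H (p j); rewrite cls_refl.
rewrite -sumr_const -sumrB; apply: isM_sum => i Hi.
apply/cls_mem; by rewrite (cls_eq Hl0) -(cls_eq Hi) cls_refl.
Qed.


Lemma tact_sum p (F : 'I_r -> {ffun 'I_r -> int}) :
  tact p (\sum_j F j) = \sum_j tact p (F j).
Proof. by apply/ffunP => i; rewrite ffunE !sum_ffunE; apply: eq_bigr => j _; rewrite ffunE. Qed.

Lemma PicT0 : PicT u W 0.
Proof.
exists 0, (fun _ => 0); split; first exact: isM0.
by rewrite big1 ?addr0 // => j _; rewrite mulr0z.
Qed.

Lemma ImT_PicT D : ImTDivW u W D <-> PicT u W D.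
Proof.
pose X j := orbsum u W j *+ #|cls u j|.
split.
- move=> [D1 [D2 [HD1 HD2 ->]]].
  pose c j := if rep W j == j then D2 j else 0.
  have ED2 : D2 = \sum_j osum j *~ c j.
    apply/ffunP => x; rewrite sum_ffunE.
    have Hrx : rep W x \in orbit 'P W x := rep_orbit W x.
    rewrite (bigD1 (rep W x)) //= big1 ?addr0.
      rewrite ffunMzE ffunE orbit_sym Hrx /c (rep_eq Hrx) eqxx.
      case/orbitP: (Hrx) => g Hg Eg.
      rewrite -Eg /= /aperm.
      have -> : D2 (g x) = tact g D2 x by rewrite ffunE.
      by rewrite HD2 // mulr1n mulrzz mul1r.
    move=> j Hj; rewrite ffunMzE ffunE /c.
    case: (boolP (x \in orbit 'P W j)) => Hx; last by rewrite mul0rz.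
    case: eqP => Ej; last by rewrite mulr0z.
    by move: Hj; rewrite (rep_eq Hx) Ej eqxx.
  exists (D1 + \sum_j (osum j - X j) *~ c j), c; split.
    by apply: isMD => //; apply: isM_sum => j _; apply: isMZ; apply: key.
  rewrite ED2 -addrA; congr (_ + _); rewrite -big_split; apply: eq_bigr => j _ /=.
  by rewrite mulrzBl subrK.
- move=> [D1 [c [HD1 ->]]].
  exists (D1 - \sum_j (osum j - X j) *~ c j), (\sum_j osum j *~ c j); split.
  + by apply: isMB => //; apply: isM_sum => j _; apply: isMZ; apply: key.
  + by move=> p Hp; rewrite tact_sum; apply: eq_bigr => j _; rewrite tactZ osum_inv.
  + have -> : \sum_j X j *~ c j = \sum_j osum j *~ c j - \sum_j (osum j - X j) *~ c j.
      by rewrite -sumrB; apply: eq_bigr => j _; rewrite mulrzBl opprB addrC subrK.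
    by rewrite [_ - _]addrC addrA.
Qed.

Lemma part2 : quot_iso (PicJ u W) (ImTDivW u W) (PicJ u W) (PicT u W).
Proof.
exists id; split => //.
- by move=> x y _ _; rewrite subrr; exact: PicT0.
- by move=> D _; split => /ImT_PicT.
- by move=> y Hy; exists y => //; rewrite subrr; exact: PicT0.
Qed.

End Part2.

Theorem lemma6p3 (n r : nat) (u : 'I_r -> 'rV[int]_n)
    (cones : {set {set 'I_r}}) (W : {group {perm 'I_r}}) :
  smooth_projective_fan u cones ->
  (forall p, p \in W -> is_autS u cones p) ->
  (forall p, is_autS u cones p ->
     (forall D, isM u (tact p D - D)) -> p \in W) ->
  quot_iso (Z1 u W) (B1 u W) (PicJ u W) (ImTDivW u W) /\
  quot_iso (PicJ u W) (ImTDivW u W) (PicJ u W) (PicT u W).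
Proof.
move=> [Hfan Hsm Hcomp _] HW Hker; split.
- exact: (part1 Hcomp HW).
- exact: (part2 Hfan Hsm Hcomp HW Hker).
Qed.
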